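(* Let $X$ be a Banach space, $H$ a Hilbert space, $T\in\mathcal L(X,H)$, $f\in H$, $J$ a seminorm on $X$ such that all Tikhonov functionals below have minimizers, and $(\lambda_k)$ an increasing sequence of positive parameters. Fix $k$ and assume that the MHDM iterate $x_k$ coincides with a chosen minimizer $x_{\lambda_k}$ of $x\mapsto\frac{\lambda_k}{2}\|Tx-f\|^2+J(x)$. Let $x_{\lambda_{k+1}}$ be a minimizer of $x\mapsto\frac{\lambda_{k+1}}{2}\|Tx-f\|^2+J(x)$ and $\xi_{\lambda_{k+1}}=\lambda_{k+1}T^*(f-Tx_{\lambda_{k+1}})\in\partial J(x_{\lambda_{k+1}})$. Then $$x_{\lambda_{k+1}}\in\arg\min_{x\in X}\Big\{\frac{\lambda_{k+1}}{2}\|Tx-f\|^2+J(x-x_k)\Big\}$$ if and only if $$D_J^{\xi_{\lambda_{k+1}}}(x_{\lambda_{k+1}}-x_{\lambda_k},x_{\lambda_{k+1}})=J(x_{\lambda_{k+1}}-x_{\lambda_k})-J(x_{\lambda_{k+1}})+\langle\xi_{\lambda_{k+1}},x_{\lambda_k}\rangle=0.$$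
   Context: Seminorm: $J:X\to[0,\infty]$ with $J(\alpha x)=|\alpha|J(x)$, $J(x+y)\le J(x)+J(y)$. Subgradient: $\partial J(x_0)=\{x^*\in X^*:\langle x^*,x-x_0\rangle\le J(x)-J(x_0)\ \forall x\}$; Bregman distance $D_J^{x^*}(x_1,x_0)=J(x_1)-J(x_0)-\langle x^*,x_1-x_0\rangle$ for $x^*\in\partial J(x_0)$. MHDM: $x_0\in\arg\min_x\frac{\lambda_0}{2}\|Tx-f\|^2+J(x)$, and for $k\ge1$, $x_k\in\arg\min_x\frac{\lambda_k}{2}\|Tx-f\|^2+J(x-x_{k-1})$. *)

(* Defs.v *)
From HB Require Import structures.
From mathcomp Require Import all_boot all_order all_algebra.
From mathcomp Require Import all_classical all_reals all_analysis.
Set Implicit Arguments. Unset Strict Implicit. Unset Printing Implicit Defensive.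
Import Order.TTheory GRing.Theory Num.Theory.
Import numFieldNormedType.Exports.
Local Open Scope ring_scope.

(* A (real) inner product compatible with the norm of H:
   H : completeNormedModType R together with such an inner product is a
   Hilbert space. *)
Definition is_inner_product (R : realType) (H : normedModType R)
  (ip : H -> H -> R) : Prop :=
  [/\ forall a x y z, ip (a *: x + y) z = a * ip x z + ip y z,
      forall x y, ip x y = ip y x &
      forall x, `|x| ^+ 2 = ip x x].

(* Adjoint T^* : H -> X^*, with H^* identified with H via Riesz:
   <T^* h, x> = (h, T x)_H. *)
Definition adjoint (R : realType) (X H : normedModType R) (ip : H -> H -> R)
  (T : X -> H) (h : H) : X -> R := fun x => ip h (T x).

Definition is_seminorm (R : realType) (X : normedModType R)
  (J : X -> \bar R) : Prop :=
  [/\ forall x, (0 <= J x)%E,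
      forall (a : R) x, J (a *: x) = (`|a|%:E * J x)%E &
      forall x y, (J (x + y)%R <= J x + J y)%E].

Definition is_argmin (T : Type) (R : realType) (F : T -> \bar R) (x : T) : Prop :=
  forall y, (F x <= F y)%E.

Definition tikhonov (R : realType) (X H : normedModType R) (T : X -> H) (f : H)
  (J : X -> \bar R) (lam : R) (x : X) : \bar R :=
  ((lam / 2 * `|T x - f| ^+ 2)%:E + J x)%E.

Definition mhdm_fun (R : realType) (X H : normedModType R) (T : X -> H) (f : H)
  (J : X -> \bar R) (lam : R) (z : X) (x : X) : \bar R :=
  ((lam / 2 * `|T x - f| ^+ 2)%:E + J (x - z)%R)%E.

Definition is_mhdm (R : realType) (X H : normedModType R) (T : X -> H) (f : H)
  (J : X -> \bar R) (lam : nat -> R) (xs : nat -> X) : Prop :=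
  is_argmin (tikhonov T f J (lam 0%N)) (xs 0%N) /\
  forall n, is_argmin (mhdm_fun T f J (lam n.+1) (xs n)) (xs n.+1).

Definition bregman (R : realType) (X : normedModType R) (J : X -> \bar R)
  (xi : X -> R) (x1 x0 : X) : \bar R :=
  (J x1 - J x0 - (xi (x1 - x0)%R)%:E)%E.

(* Main.v *)
Require Import Defs.
From HB Require Import structures.
From mathcomp Require Import all_boot all_order all_algebra.
From mathcomp Require Import all_classical all_reals all_analysis.
From mathcomp Require Import ring lra.
Import Order.TTheory GRing.Theory Num.Theory.
Import numFieldNormedType.Exports.
Local Open Scope ring_scope.
Set Implicit Arguments. Unset Strict Implicit.

Lemma ip0l (R : realType) (H : normedModType R) (ip : H -> H -> R)
  (hip : is_inner_product ip) z : ip 0 z = 0.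
Proof. case: hip => h1 _ _; have := h1 1 0 0 z; rewrite scale1r addr0 mul1r. lra. Qed.
Lemma ipDl (R : realType) (H : normedModType R) (ip : H -> H -> R)
  (hip : is_inner_product ip) x y z : ip (x + y) z = ip x z + ip y z.
Proof. case: hip => h1 _ _; by have := h1 1 x y z; rewrite scale1r mul1r. Qed.
Lemma ipZl (R : realType) (H : normedModType R) (ip : H -> H -> R)
  (hip : is_inner_product ip) a x z : ip (a *: x) z = a * ip x z.
Proof. have := ip0l hip z; case: hip => h1 _ _ h0.
by have := h1 a x 0 z; rewrite addr0 h0 addr0. Qed.
Lemma ipNl (R : realType) (H : normedModType R) (ip : H -> H -> R)
  (hip : is_inner_product ip) x z : ip (- x) z = - ip x z.
Proof. by rewrite -scaleN1r (ipZl hip) mulN1r. Qed.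
Lemma ipC (R : realType) (H : normedModType R) (ip : H -> H -> R)
  (hip : is_inner_product ip) x z : ip x z = ip z x.
Proof. by case: hip. Qed.
Lemma ipsq (R : realType) (H : normedModType R) (ip : H -> H -> R)
  (hip : is_inner_product ip) x : `|x| ^+ 2 = ip x x.
Proof. by case: hip. Qed.
Lemma normD2 (R : realType) (H : normedModType R) (ip : H -> H -> R)
  (hip : is_inner_product ip) a b :
  `|a + b| ^+ 2 = `|a| ^+ 2 + 2 * ip a b + `|b| ^+ 2.
Proof.
rewrite !(ipsq hip) !(ipDl hip) (ipC hip b (a + b)) (ipC hip a (a + b)) !(ipDl hip).
rewrite (ipC hip b a); ring.
Qed.
Lemma subgrad_gen (R : realType) (X : lmodType R) (Q xi N : X -> R)
  (g : X -> \bar R) (x1 : X) (c : R)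
  (hxi : forall t d, xi (t *: d) = t * xi d)
  (hN : forall t d, N (t *: d) = t ^+ 2 * N d) (hN0 : forall d, 0 <= N d)
  (hQ : forall y, Q y = Q x1 - xi (y - x1) + N (y - x1))
  (hg0 : forall y, (0 <= g y)%E)
  (hconv : forall y b t, g y = b%:E -> 0 < t < 1 ->
      (g (x1 + t *: (y - x1))%R <= ((1 - t) * c + t * b)%R%:E)%E)
  (hmin : forall z, ((Q x1 + c)%R%:E <= (Q z)%:E + g z)%E) :
  forall y, ((c + xi (y - x1))%R%:E <= g y)%E.
Proof.
move=> y; case Egy: (g y) => [b||]; last 2 first.
- by rewrite leey.
- by have := hg0 y; rewrite Egy.
set d := y - x1.
have key : forall t, 0 < t < 1 -> 0 <= - xi d + t * N d + b - c.
  move=> t /andP[t0 t1].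
  have H1 := hmin (x1 + t *: d).
  have H2 := hconv y b t Egy (andb_true_intro (conj t0 t1)).
  move: H1 H2; case Eg: (g (x1 + t *: d)) => [e||]; last 2 first.
  - by [].
  - by move=> _ _; have := hg0 (x1 + t *: d); rewrite Eg.
  rewrite -EFinD !lee_fin => H1 H2.
  have Hz : x1 + t *: d - x1 = t *: d by rewrite [x1 + _]addrC addrK.
  rewrite (hQ (x1 + t *: d)) Hz hxi hN in H1.
  have H3 : 0 <= t * (- xi d + t * N d + b - c) by nra.
  by rewrite pmulr_rge0 in H3.
rewrite lee_fin leNgt; apply/negP => hlt.
set u := c + xi d - b.
have u0 : 0 < u by rewrite /u; lra.
have D0 : 0 < u + 2 * N d + 2 by have := hN0 d; lra.
set t := u / (u + 2 * N d + 2).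
have t0 : 0 < t by rewrite /t divr_gt0.
have t1 : t < 1 by rewrite /t ltr_pdivrMr // mul1r; have := hN0 d; lra.
have := key t (andb_true_intro (conj t0 t1)).
have : t * N d < u.
  rewrite /t mulrC mulrA ltr_pdivrMr //.
  have := hN0 d; nra.
rewrite /u; lra.
Qed.
Lemma vid2 (R : comRingType) (X : lmodType R) (x1 x0 y : X) t :
  x1 + t *: (y - x1) - x0 = (1 - t) *: (x1 - x0) + t *: (y - x0).
Proof.
rewrite !scalerBr !scalerBl !scale1r.
rewrite !opprB.
rewrite -!addrA; congr (_ + _).
rewrite [t *: x0 + _]addrCA [t *: x0 + _]addrCA subrr addr0.
by rewrite addrCA [- x0 + _]addrC.
Qed.

Lemma vid (R : realType) (X : lmodType R) (x1 y : X) t :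
  x1 + t *: (y - x1) = (1 - t) *: x1 + t *: y.
Proof. by rewrite scalerBr scalerBl scale1r addrCA addrC. Qed.

Lemma conv_sn (R : realType) (X : normedModType R) (J : X -> \bar R)
  (hJ : is_seminorm J) u v t c b : 0 < t < 1 -> J u = c%:E -> J v = b%:E ->
  (J ((1 - t) *: u + t *: v)%R <= ((1 - t) * c + t * b)%R%:E)%E.
Proof.
move=> /andP[t0 t1] Ju Jv; case: hJ => _ h2 h3.
apply: le_trans (h3 _ _) _; rewrite !h2 Ju Jv -!EFinM -EFinD lee_fin.
rewrite (ger0_norm (ltW t0)) ger0_norm //; lra.
Qed.

Theorem mainTheorem10 (R : realType)
  (X : completeNormedModType R) (H : completeNormedModType R)
  (ip : H -> H -> R) (hip : is_inner_product ip)
  (T : {linear X -> H}) (hTc : continuous T) (f : H)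
  (J : X -> \bar R) (hJ : is_seminorm J)
  (hmin : forall (lam : R) (z : X), 0 < lam ->
            exists x, is_argmin (mhdm_fun T f J lam z) x)
  (hmin0 : forall lam : R, 0 < lam -> exists x, is_argmin (tikhonov T f J lam) x)
  (lam : nat -> R) (hpos : forall n, 0 < lam n)
  (hinc : forall n, lam n <= lam n.+1)
  (xs : nat -> X) (hxs : is_mhdm T f J lam xs)
  (k : nat) (xlk : X) (hxlk : is_argmin (tikhonov T f J (lam k)) xlk)
  (hk : xs k = xlk)
  (xlk1 : X) (hxlk1 : is_argmin (tikhonov T f J (lam k.+1)) xlk1) :
  let xi : X -> R := fun x => lam k.+1 * adjoint ip T (f - T xlk1) x in
  is_argmin (mhdm_fun T f J (lam k.+1) (xs k)) xlk1 <->
  bregman J xi (xlk1 - xlk) xlk1 = 0%E.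
Proof.
move=> xi.
case: (hJ) => J1 J2 J3.
rewrite hk.
have hL : 0 < lam k.+1 := hpos _.
pose Q := fun y => lam k.+1 / 2 * `|T y - f| ^+ 2.
pose N := fun d => lam k.+1 / 2 * `|T d| ^+ 2.
have J0 : J 0 = 0%E by have := J2 0 0; rewrite scale0r normr0 mul0e.
have hxiZ : forall t d, xi (t *: d) = t * xi d.
  move=> t d; rewrite /xi /adjoint linearZ (ipC hip) (ipZl hip) (ipC hip); ring.
have hxiB : forall a b, xi (a - b) = xi a - xi b.
  move=> a b; rewrite /xi /adjoint linearB (ipC hip _ (T a - T b)) (ipDl hip) (ipNl hip).
  rewrite (ipC hip (T a)) (ipC hip (T b)); ring.
have hxi0 : xi 0 = 0 by have := hxiZ 0 0; rewrite scale0r mul0r.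
have hN : forall t d, N (t *: d) = t ^+ 2 * N d.
  move=> t d; rewrite /N linearZ normrZ exprMn real_normK ?num_real //; ring.
have hN0 : forall d, 0 <= N d.
  move=> d; rewrite /N mulr_ge0 ?sqr_ge0 // divr_ge0 // ltW //.
have hQ : forall y, Q y = Q xlk1 - xi (y - xlk1) + N (y - xlk1).
  move=> y; rewrite /Q /N /xi /adjoint.
  have -> : T y - f = T (y - xlk1) + (T xlk1 - f) by rewrite linearB addrA subrK.
  rewrite (normD2 hip).
  have -> : f - T xlk1 = - (T xlk1 - f) by rewrite opprB.
  rewrite (ipNl hip) (ipC hip (T (y - xlk1))); by field.
have [j1 Ej1] : exists j1, J xlk1 = j1%:E.
  have := hxlk1 0; rewrite /tikhonov J0 adde0.
  case E: (J xlk1) => [j1||]; first by exists j1.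
  - by [].
  - by have := J1 xlk1; rewrite E.
have hconvJ : forall y b t, J y = b%:E -> 0 < t < 1 ->
    (J (xlk1 + t *: (y - xlk1))%R <= ((1 - t) * j1 + t * b)%R%:E)%E.
  by move=> y0 b t Jy ht; rewrite vid; apply: conv_sn.
have hmin1 : forall z, ((Q xlk1 + j1)%R%:E <= (Q z)%:E + J z)%E.
  by move=> z; rewrite EFinD -Ej1; exact: hxlk1 z.
have SG := subgrad_gen hxiZ hN hN0 hQ J1 hconvJ hmin1.
have hx1 : xi xlk1 = j1.
  have h0 := SG 0; rewrite J0 hxiB hxi0 lee_fin in h0.
  have h2 := SG (xlk1 + xlk1); rewrite addrK in h2.
  have h3 := le_trans h2 (J3 xlk1 xlk1); rewrite Ej1 -EFinD lee_fin in h3.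
  lra.
have hbd : forall y b, J y = b%:E -> xi y <= b.
  move=> y b Jy; have h := SG (xlk1 + y); rewrite [xlk1 + y]addrC addrK in h.
  have h3 := le_trans h (J3 y xlk1); rewrite Ej1 Jy -EFinD lee_fin in h3.
  lra.
split.
- move=> hG.
  have := hG xlk; rewrite /mhdm_fun subrr J0 adde0.
  case E: (J (xlk1 - xlk)) => [b||]; last 2 first.
  + by [].
  + by have := J1 (xlk1 - xlk); rewrite E.
  move=> _.
  have hconv2 : forall y b' t, J (y - xlk) = b'%:E -> 0 < t < 1 ->
      (J (xlk1 + t *: (y - xlk1) - xlk)%R <= ((1 - t) * b + t * b')%R%:E)%E.
    by move=> y b' t Jy ht; rewrite vid2; apply: conv_sn.
  have hmin2 : forall z, ((Q xlk1 + b)%R%:E <= (Q z)%:E + J (z - xlk)%R)%E.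
    by move=> z; rewrite EFinD -E; exact: hG z.
  have SG2 := subgrad_gen (g := fun y => J (y - xlk)) hxiZ hN hN0 hQ
    (fun y => J1 _) hconv2 hmin2.
  have h : ((b + xi (xlk - xlk1))%R%:E <= J (xlk - xlk)%R)%E := SG2 xlk.
  rewrite subrr J0 lee_fin hxiB in h.
  have hb := hbd _ _ E; rewrite hxiB in hb.
  rewrite /bregman E Ej1 -!EFinB; congr EFin.
  rewrite !hxiB; lra.
- move=> hB y.
  rewrite /bregman Ej1 in hB.
  move: hB; case E: (J (xlk1 - xlk)) => [b||]; last 2 first.
  + by [].
  + by have := J1 (xlk1 - xlk); rewrite E.
  rewrite -!EFinB => /eqP; rewrite eqe => /eqP hB.
  rewrite /mhdm_fun E.
  case E2: (J (y - xlk)) => [b'||]; last 2 first.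
  + by rewrite leey.
  + by have := J1 (y - xlk); rewrite E2.
  rewrite -!EFinD lee_fin.
  have h1 := hbd _ _ E2; have h2 := hQ y; have h3 := hN0 (y - xlk1).
  rewrite !hxiB in h1 h2 hB.
  rewrite /Q in h2; lra.
Qed.
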